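(* Let $k$ be a positive integer. If $m$ and $n$ are positive integers with $m\equiv n\pmod k$, then $R_k^m\cong R_k^n$.
   Context: $\mathbb{N}=\{1,2,3,\dots\}$. $R$ denotes the ring of all $\mathbb{N}\times\mathbb{N}$ integer matrices with only finitely many nonzero entries in each row and each column, with entrywise addition and multiplication $(AB)_{i,j}=\sum_{l\ge1}a_{i,l}b_{l,j}$. Fix a positive integer $k$. Partition $\mathbb{N}$ into consecutive blocks $J_1=\{1\}$ and, for $m\ge2$, $J_m=\{2+k(m-2),\dots,1+k(m-1)\}$. For $A\in R$, the block $A^{m,n}$ is the submatrix with rows indexed by $J_m$ and columns by $J_n$. $R_k$ is the subring of $A\in R$ such that for all but finitely many pairs $(m,n)$ with $m,n\ge2$, $A^{m,n}=cI_k$ for some integer $c$. For a ring $S$, $S^n$ is the free left $S$-module of $n$-tuples with componentwise operations; $S^m\cong S^n$ means there is a bijective left-$S$-linear map $S^m\to S^n$, equivalently there exist $X\in M_{m\times n}(S)$, $Y\in M_{n\times m}(S)$ with $XY=I_m$, $YX=I_n$. *)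

(* Defs.v *)
From mathcomp Require Import all_boot all_order all_algebra.
Set Implicit Arguments. Unset Strict Implicit. Unset Printing Implicit Defensive.
Import GRing.Theory Num.Theory.
Local Open Scope ring_scope.

(* An N x N integer matrix.  CONVENTION: indices are 0-based, i.e. the Rocq
   index i stands for the paper's index i+1 in N = {1,2,3,...}. *)
Definition imat := nat -> nat -> int.

Definition row_finite (A : imat) : Prop :=
  forall i, exists N : nat, forall j, (N <= j)%N -> A i j = 0.
Definition col_finite (A : imat) : Prop :=
  forall j, exists N : nat, forall i, (N <= i)%N -> A i j = 0.

Definition inR (A : imat) : Prop := row_finite A /\ col_finite A.

(* The paper's block J_{b+2} (b >= 0) is {2+kb, ..., 1+k(b+1)}, i.e. in 0-based
   indexing {1+kb+r | r < k}.  (J_1 = {1} is the 0-based index 0.)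
   blk_scalar k A b c : the block A^{b+2,c+2} equals c0 * I_k for some integer c0. *)
Definition blk_scalar (k : nat) (A : imat) (b c : nat) : Prop :=
  exists c0 : int, forall r s : nat, (r < k)%N -> (s < k)%N ->
    A (1 + k * b + r)%N (1 + k * c + s)%N = (if r == s then c0 else 0).

Definition inRk (k : nat) (A : imat) : Prop :=
  inR A /\
  exists N : nat, forall b c : nat, (N <= b)%N \/ (N <= c)%N -> blk_scalar k A b c.

(* ev_sum f v : the series sum_{l >= 0} f l is eventually constant, equal to v
   (for rows/columns with finite support this is the entry of the product). *)
Definition ev_sum (f : nat -> int) (v : int) : Prop :=
  exists N : nat, forall M : nat, (N <= M)%N -> \sum_(l < M) f l = v.

Definition Rmx (p q : nat) := 'I_p -> 'I_q -> imat.

Definition R0 : imat := fun _ _ => 0.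
Definition R1 : imat := fun i j => (i == j)%:R.

Definition Rmx1 (p : nat) : Rmx p p := fun a c => if a == c then R1 else R0.

Definition mx_mul_is (p q r : nat) (X : Rmx p q) (Y : Rmx q r) (Z : Rmx p r) : Prop :=
  forall (a : 'I_p) (c : 'I_r) (i j : nat),
    ev_sum (fun l => \sum_(b < q) X a b i l * Y b c l j) (Z a c i j).

(* R_k^m ≅ R_k^n as left R_k-modules: X in M_{m x n}(R_k), Y in M_{n x m}(R_k),
   XY = I_m, YX = I_n. *)
Definition Rk_free_iso (k m n : nat) : Prop :=
  exists (X : Rmx m n) (Y : Rmx n m),
    (forall a b, inRk k (X a b)) /\ (forall b a, inRk k (Y b a)) /\
    mx_mul_is X Y (@Rmx1 m) /\ mx_mul_is Y X (@Rmx1 n).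

(* Main.v *)
Require Import Defs.
From mathcomp Require Import all_boot all_order all_algebra.
From mathcomp Require Import zify.
Set Implicit Arguments. Unset Strict Implicit. Unset Printing Implicit Defensive.
Import GRing.Theory Num.Theory.

Lemma dm (d p r : nat) : r < d -> (p * d + r) %/ d = p /\ (p * d + r) %% d = r.
Proof.
move=> rd; have d0 : 0 < d by apply: leq_ltn_trans rd.
by rewrite divnMDl // divn_small // addn0 modnMDl modn_small.
Qed.

Lemma eq_blk (k x y r s : nat) : r < k -> s < k ->
  (1 + k * x + r == 1 + k * y + s) = (x == y) && (r == s).
Proof.
move=> rk sk; apply/eqP/andP => [h|[/eqP -> /eqP ->]//].
have h' : x * k + r = y * k + s.
  by apply: (@addnI 1); rewrite !addnA ![_ * k]mulnC.
have [hx hr] := dm x rk; have [hy hs] := dm y sk.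
split; apply/eqP.
  by rewrite -hx -hy h'.
by rewrite -hr -hs h'.
Qed.


Section Perm.
Variables (k m n jj : nat).
Hypotheses (k0 : 0 < k) (m0 : 0 < m) (Hn : n = m + jj * k).

Definition sg (a i : nat) : nat * nat :=
  if i == 0 then (a, 0) else
  let p := i.-1 %/ k in let r := i.-1 %% k in let t := p * m + a in
  if t < jj then (m + t * k + r, 0)
  else ((t - jj) %% n, 1 + k * ((t - jj) %/ n) + r).

Definition tg (b l : nat) : nat * nat :=
  if l == 0 then
    (if b < m then (b, 0) else
     let u := b - m in ((u %/ k) %% m, 1 + k * ((u %/ k) %/ m) + u %% k))
  else
  let q := l.-1 %/ k in let r := l.-1 %% k in let t := q * n + b + jj in
  (t %% m, 1 + k * (t %/ m) + r).

Lemma n0 : 0 < n.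
Proof. by rewrite Hn; apply: leq_trans m0 (leq_addr _ _). Qed.

Lemma dec i : 0 < i -> i = 1 + k * (i.-1 %/ k) + i.-1 %% k.
Proof. by move=> i0; rewrite mulnC -addnA -divn_eq add1n prednK. Qed.

Lemma sg_blk a p r : r < k -> sg a (1 + k * p + r) =
  let t := p * m + a in if t < jj then (m + t * k + r, 0)
  else ((t - jj) %% n, 1 + k * ((t - jj) %/ n) + r).
Proof.
move=> rk; rewrite /sg -addnA add1n /= [k * p]mulnC.
by have [-> ->] := dm p rk.
Qed.

Lemma tg_blk b q r : r < k -> tg b (1 + k * q + r) =
  let t := q * n + b + jj in (t %% m, 1 + k * (t %/ m) + r).
Proof.
move=> rk; rewrite /tg -addnA add1n /= [k * q]mulnC.
by have [-> ->] := dm q rk.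
Qed.

Lemma tg_ext t r : t < jj -> r < k ->
  tg (m + t * k + r) 0 = (t %% m, 1 + k * (t %/ m) + r).
Proof.
move=> tj rk; rewrite /tg /=.
have -> : (m + t * k + r < m) = false by apply/negbTE; rewrite -ltnNge -addnA leq_addr.
by rewrite -addnA addKn; have [-> ->] := dm t rk.
Qed.

Lemma sg_tg a i : a < m -> tg (sg a i).1 (sg a i).2 = (a, i).
Proof.
move=> am; case: i => [|i]; first by rewrite /sg /tg /= am.
rewrite (dec (ltn0Sn i)); set p := _ %/ k; set r := _ %% k.
have rk : r < k by apply: ltn_pmod.
rewrite sg_blk //=; have [hd hm] := dm p am.
case: ifP => tj /=.
  by rewrite tg_ext // hd hm.
rewrite tg_blk // /= -divn_eq subnK ?hd ?hm //.
by rewrite leqNgt tj.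
Qed.

Lemma tg_sg b l : b < n -> sg (tg b l).1 (tg b l).2 = (b, l).
Proof.
move=> bn; case: l => [|l].
  rewrite /tg /=; case: ifP => bm; first by [].
  set u := b - m.
  have uj : u %/ k < jj.
    rewrite ltn_divLR // /u; move: bn bm; rewrite Hn => bn /negbT bm; lia.
  rewrite /= sg_blk ?ltn_pmod // /= -divn_eq uj -addnA -divn_eq /u subnKC //.
  by rewrite leqNgt bm.
rewrite (dec (ltn0Sn l)); set q := _ %/ k; set r := _ %% k.
have rk : r < k by apply: ltn_pmod.
rewrite tg_blk // /= sg_blk ?ltn_pmod // /= -divn_eq.
have -> : (q * n + b + jj < jj) = false by apply/negbTE; rewrite -leqNgt leq_addl.
by rewrite addnK; have [-> ->] := dm q bn.
Qed.

Lemma sg_bound a i : a < m -> (sg a i).1 < n.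
Proof.
move=> am; case: i => [|i]; first by rewrite /sg /= Hn; apply: leq_trans am (leq_addr _ _).
rewrite (dec (ltn0Sn i)); set p := _ %/ k; set r := _ %% k.
have rk : r < k by apply: ltn_pmod.
rewrite sg_blk //=; case: ifP => tj /=; last by apply: ltn_pmod n0.
rewrite Hn; move: tj rk; set t := p * m + a; nia.
Qed.

Lemma tg_bound b l : b < n -> (tg b l).1 < m.
Proof.
move=> bn; rewrite /tg; case: ifP => _; last by apply: ltn_pmod.
by case: ifP => // _; apply: ltn_pmod.
Qed.

Lemma sg_inj a a' i i' : a < m -> a' < m -> (sg a i == sg a' i') = ((a, i) == (a', i')).
Proof.
move=> am am'; apply/eqP/eqP => h; last by case: h => -> ->.
by rewrite -(sg_tg i am) h sg_tg.
Qed.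

Lemma tg_inj b b' l l' : b < n -> b' < n -> (tg b l == tg b' l') = ((b, l) == (b', l')).
Proof.
move=> bn bn'; apply/eqP/eqP => h; last by case: h => -> ->.
by rewrite -(tg_sg l bn) h tg_sg.
Qed.

Lemma sg_tgE a i b l : a < m -> b < n -> (sg a i == (b, l)) = (tg b l == (a, i)).
Proof.
move=> am bn; apply/eqP/eqP => h.
  by have := sg_tg i am; rewrite h.
by have := tg_sg l bn; rewrite h.
Qed.

Lemma sg_blk_scalar a b p q : exists c0 : nat, forall r s, r < k -> s < k ->
  (sg a (1 + k * p + r) == (b, 1 + k * q + s)) = (r == s) && (c0 == 1).
Proof.
case tj: (p * m + a < jj).
  exists 0 => r s rk sk; rewrite sg_blk //= tj xpair_eqE andbF.
  by rewrite andbF.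
exists ((((p * m + a - jj) %% n == b) && ((p * m + a - jj) %/ n == q)) : nat).
move=> r s rk sk; rewrite sg_blk //= tj xpair_eqE eq_blk //.
by case: (_ == b); case: (_ == q); case: (r == s).
Qed.

End Perm.

Local Open Scope ring_scope.

Lemma key (n M : nat) (u v : nat * nat) : (u.1 < n)%N -> (u.2 < M)%N ->
  \sum_(l < M) \sum_(b < n) (((u == (val b, val l))%:R * (v == (val b, val l))%:R) : int)
  = (u == v)%:R.
Proof.
case: u => u1 u2 /= h1 h2.
have E : forall b l : nat, ((((u1, u2) == (b, l))%:R * (v == (b, l))%:R) : int)
   = ((u1, u2) == (b, l))%:R * ((u1, u2) == v)%:R.
  move=> b l; case: eqP => [<-|_]; last by rewrite !mul0r.
  by rewrite eq_sym.
under eq_bigr => l _ do under eq_bigr => b _ do rewrite E.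
under eq_bigr => l _ do rewrite -big_distrl /=.
rewrite -big_distrl /=.
rewrite (bigD1 (Ordinal h2)) //= (bigD1 (Ordinal h1)) //= eqxx.
idtac.
rewrite big1; last first.
  move=> b hb; rewrite xpair_eqE eqxx andbT.
  case: eqP => // e; case/negP: hb; apply/eqP/val_inj => /=; by rewrite e.
rewrite big1; last first.
  move=> l hl; apply: big1 => b _; rewrite xpair_eqE.
  case: (u2 =P l) => [e|]; last by rewrite andbF.
  case/negP: hl; apply/eqP/val_inj => /=; by rewrite e.
by rewrite !addr0 mul1r.
Qed.

Section Iso.
Variables (k m n jj : nat).
Hypotheses (k0 : (0 < k)%N) (m0 : (0 < m)%N) (Hn : n = m + jj * k).

Definition Xm : Rmx m n := fun a b i l => ((sg k m n jj a i == (val b, l)) : nat)%:R.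
Definition Ym : Rmx n m := fun b a l i => ((sg k m n jj a i == (val b, l)) : nat)%:R.

Lemma iso_up : Rk_free_iso k m n.
Proof.
exists Xm, Ym; split; [|split; [|split]].
- move=> a b; split; [split|].
  + move=> i; exists (sg k m n jj a i).2.+1 => l hl; rewrite /Xm.
    by case: eqP => // e; move: hl; rewrite e /= ltnn.
  + move=> l; exists (tg k m n jj b l).2.+1 => i hi; rewrite /Xm sg_tgE ?ltn_ord //.
    by case: eqP => // e; move: hi; rewrite e /= ltnn.
  + exists 0%N => p q _; have [c0 h] := sg_blk_scalar k m n jj a b p q.
    exists ((c0 == 1%N) : nat)%:R => r s rk sk; rewrite /Xm h //.
    by case: (r == s).
- move=> b a; split; [split|].
  + move=> l; exists (tg k m n jj b l).2.+1 => i hi; rewrite /Ym sg_tgE ?ltn_ord //.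
    by case: eqP => // e; move: hi; rewrite e /= ltnn.
  + move=> i; exists (sg k m n jj a i).2.+1 => l hl; rewrite /Ym.
    by case: eqP => // e; move: hl; rewrite e /= ltnn.
  + exists 0%N => q p _; have [c0 h] := sg_blk_scalar k m n jj a b p q.
    exists ((c0 == 1%N) : nat)%:R => r s rk sk; rewrite /Ym h // eq_sym.
    by case: (r == s).
- move=> a c i j; exists (sg k m n jj a i).2.+1 => M hM; rewrite /Xm /Ym /=.
  rewrite key ?sg_bound ?ltn_ord // sg_inj ?ltn_ord // /Rmx1 /R1 /R0 xpair_eqE.
  by case: (a =P c) => [->|ne]; rewrite ?eqxx //; case: eqP => // /val_inj.
- move=> b c l l'; exists (tg k m n jj b l).2.+1 => M hM; rewrite /Xm /Ym /=.
  under eq_bigr => i _ do under eq_bigr => a _ do rewrite !sg_tgE ?ltn_ord //.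
  rewrite key ?tg_bound ?ltn_ord // tg_inj ?ltn_ord // /Rmx1 /R1 /R0 xpair_eqE.
  by case: (b =P c) => [->|ne]; rewrite ?eqxx //; case: eqP => // /val_inj.
Qed.
End Iso.

Lemma iso_sym k m n : Rk_free_iso k m n -> Rk_free_iso k n m.
Proof. by case=> X [Y [hx [hy [h1 h2]]]]; exists Y, X. Qed.

Theorem lemma1 (k m n : nat) :
  (0 < k)%N -> (0 < m)%N -> (0 < n)%N -> m = n %[mod k] -> Rk_free_iso k m n.
Proof.
move=> k0 m0 n0 hmod.
wlog mn : m n m0 n0 hmod / (m <= n)%N.
  move=> H; case: (leqP m n) => h; first exact: H.
  by apply: iso_sym; apply: H => //; try rewrite hmod; apply: ltnW.
have hd : (k %| n - m)%N by rewrite -eqn_mod_dvd // hmod.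
apply: (@iso_up k m n ((n - m) %/ k)) => //.
by rewrite -[RHS]/(m + (n - m) %/ k * k)%N divnK // subnKC.
Qed.
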